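(* Let $G=\langle V,E_s\rangle$ be an undirected graph with $V=\{1,\dots,n\}$, where edges are treated as bidirected (so $(i,j)\in E_s$ iff $(j,i)\in E_s$, and there are no loops). Let $\mu_{ij}=\mu_{ji}\ge 0$ ($i\neq j$) be requirements, and let $\delta=(\delta_1,\dots,\delta_n)$ be a sequence of positive integers with $\sum_i\delta_i=2(n-1)$ such that $G$ has at least one spanning tree in which every vertex $i$ has degree $\delta_i$ (call such spanning trees admissible). Let $m=|\{i:\delta_i>1\}|$ and $L=m+2$. For a spanning tree $T$ let $C_A(T)=\sum_{i\neq j}\mu_{ij}d_T(i,j)$, where $d_T(i,j)$ is the number of edges of the path from $i$ to $j$ in $T$; an admissible tree minimizing $C_A$ is called optimal. Consider the problem (relaxed F2Q) in variables $x_{ij}=x_{ji}\in\{0,1\}$ for $(i,j)\in E_s$ and $w^{(\ell)}_{ij}=w^{(\ell)}_{ji}\in[0,1]$ for $i\neq j\in V$, $\ell\in\{1,\dots,L\}$: minimize $\displaystyle\sum_{i,j=1,\,i\neq j}^n \mu_{ij}\Big(L-\sum_{\ell=1}^{L-1} w^{(\ell)}_{ij}\Big)$ subject to - $w^{(1)}_{ij}=x_{ij}$ for all $(i,j)\in E_s$; - $w^{(1)}_{ij}=0$ for all $i<j$ with $(i,j)\notin E_s$; - $w^{(\ell)}_{ij}\le x_{ij}+\sum_{k\neq j:(i,k)\in E_s}x_{ik}w^{(\ell-1)}_{kj}$ for all $(i,j)\in E_s$, $i<j$, $\ell\in\{2,\dots,L\}$; - $w^{(\ell)}_{ij}\le \sum_{k\neq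 j:(i,k)\in E_s}x_{ik}w^{(\ell-1)}_{kj}$ for all $i<j$ with $(i,j)\notin E_s$, $\ell\in\{2,\dots,L\}$; - $w^{(L)}_{ij}=1$ for all $i<j$; - $\sum_{j:(i,j)\in E_s}x_{ij}=\delta_i$ for all $i\in V$. Then there exists an optimal solution $(x^*,w^* )$ of this problem such that the edges $\{(i,j)\in E_s: x^*_{ij}=1\}$ form an optimal tree $T^*$ and the optimal objective value equals $C_A(T^* )$.
   Context: The variables $w^{(\ell)}_{ij}$ are intended to indicate whether vertices $i$ and $j$ are joined by a path of length at most $\ell$ in the selected tree; in the unrelaxed problem they are binary, here they are relaxed to $[0,1]$ while $x$ stays binary. *)

(* Defs.v *)
From mathcomp Require Import all_boot all_order all_algebra.
Set Implicit Arguments. Unset Strict Implicit. Unset Printing Implicit Defensive.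
Import Order.TTheory GRing.Theory Num.Theory.
Local Open Scope ring_scope.

Section Defs.
Variable n : nat.

Fixpoint reach (t : rel 'I_n) (k : nat) (i j : 'I_n) : bool :=
  match k with
  | 0 => i == j
  | k'.+1 => [exists v, t i v && reach t k' v j]
  end.

(* d_T(i,j): the least number of edges of a walk from i to j in t
   (in a tree: the number of edges of the unique i-j path).
   Returns n if j is unreachable from i (never happens in a spanning tree). *)
Definition tdist (t : rel 'I_n) (i j : 'I_n) : nat :=
  find (fun k => reach t k i j) (iota 0 n).

(* t is a spanning tree of the graph e: t is a symmetric subrelation of e,
   connected, with exactly n-1 (undirected) edges, i.e. 2(n-1) ordered pairs. *)
Definition is_spanning_tree (e t : rel 'I_n) : Prop :=
  [/\ forall i j, t i j -> e i j,
      symmetric t,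
      forall i j, connect t i j
    & #|[set p : 'I_n * 'I_n | t p.1 p.2]| = (2 * (n - 1))%N].

Definition tdeg (t : rel 'I_n) (i : 'I_n) : nat := #|[set j | t i j]|.

Definition admissible (e : rel 'I_n) (delta : 'I_n -> nat) (t : rel 'I_n) : Prop :=
  is_spanning_tree e t /\ forall i, tdeg t i = delta i.

Variable R : realFieldType.

Definition CA (mu : 'I_n -> 'I_n -> R) (t : rel 'I_n) : R :=
  \sum_(i : 'I_n) \sum_(j : 'I_n | i != j) mu i j * (tdist t i j)%:R.

Definition optimal_tree (e : rel 'I_n) (delta : 'I_n -> nat)
    (mu : 'I_n -> 'I_n -> R) (t : rel 'I_n) : Prop :=
  admissible e delta t /\
  forall t', admissible e delta t' -> CA mu t <= CA mu t'.

(* Feasibility for relaxed F2Q with L levels.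
   x i j is only meaningful for edges (i,j) of e; w l i j for i <> j, 1 <= l <= L. *)
Definition F2Q_feasible (e : rel 'I_n) (delta : 'I_n -> nat) (L : nat)
    (x : 'I_n -> 'I_n -> R) (w : nat -> 'I_n -> 'I_n -> R) : Prop :=
  (
   (forall i j, e i j -> (x i j = 0 \/ x i j = 1) /\ x i j = x j i) /\
   (forall l i j, (1 <= l <= L)%N -> i != j ->
        w l i j = w l j i /\ 0 <= w l i j <= 1) /\
   (forall i j, e i j -> w 1%N i j = x i j) /\
   (forall i j : 'I_n, (i < j)%N -> ~~ e i j -> w 1%N i j = 0) /\
   (forall l (i j : 'I_n), (2 <= l <= L)%N -> e i j -> (i < j)%N ->
        w l i j <= x i j + \sum_(k : 'I_n | e i k && (k != j)) x i k * w l.-1 k j) /\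
   (forall l (i j : 'I_n), (2 <= l <= L)%N -> ~~ e i j -> (i < j)%N ->
        w l i j <= \sum_(k : 'I_n | e i k && (k != j)) x i k * w l.-1 k j) /\
   (forall i j : 'I_n, (i < j)%N -> w L i j = 1) /\
   (forall i, \sum_(j : 'I_n | e i j) x i j = (delta i)%:R)).

Definition F2Q_obj (mu : 'I_n -> 'I_n -> R) (L : nat)
    (w : nat -> 'I_n -> 'I_n -> R) : R :=
  \sum_(i : 'I_n) \sum_(j : 'I_n | i != j)
     mu i j * (L%:R - \sum_(1 <= l < L) w l i j).

Definition x_edges (e : rel 'I_n) (x : 'I_n -> 'I_n -> R) : rel 'I_n :=
  fun i j => e i j && (x i j == 1).

End Defs.

(* Main.v *)
Require Import Defs.
From mathcomp Require Import all_boot all_order all_algebra.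
From mathcomp Require Import zify lra.
From Stdlib Require Import Classical FunctionalExtensionality.
Import Order.TTheory GRing.Theory Num.Theory.
Local Open Scope ring_scope.

Set Implicit Arguments. Unset Strict Implicit.
Section Graph.
Variable n : nat.
Implicit Types (t : rel 'I_n) (i j : 'I_n).

Lemma reachSr t k i j : reach t k.+1 i j = [exists v, reach t k i v && t v j].
Proof.
elim: k i j => [|k IH] i j.
  apply/existsP/existsP => [[v /andP[tiv /eqP <-]]|[v /andP[/eqP <- tij]]].
    by exists i; rewrite /= eqxx.
  by exists j; rewrite /= tij eqxx.
have -> : reach t k.+2 i j = [exists v, t i v && reach t k.+1 v j] by [].
apply/existsP/existsP => [[v /andP[tiv]]|[u /andP[/existsP[v /andP[tiv rvu]] tuj]]].
  rewrite IH => /existsP[u /andP[rvu tuj]].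
  by exists u; rewrite tuj andbT; apply/existsP; exists v; rewrite tiv.
by exists v; rewrite tiv IH; apply/existsP; exists u; apply/andP; split.
Qed.

Lemma reach_sym t k i j : symmetric t -> reach t k i j = reach t k j i.
Proof.
move=> st; elim: k i j => [|k IH] i j; first by rewrite /= eq_sym.
rewrite [RHS]reachSr.
have -> : reach t k.+1 i j = [exists v, t i v && reach t k v j] by [].
by apply: eq_existsb => v /=; rewrite IH st andbC.
Qed.

Lemma tdist_le t k i j : reach t k i j -> (k < n)%N -> (tdist t i j <= k)%N.
Proof.
move=> r kn; rewrite /tdist leqNgt; apply/negP => /(before_find 0).
by rewrite nth_iota // add0n r.
Qed.

Lemma tdist_reach t i j : (tdist t i j < n)%N -> reach t (tdist t i j) i j.
Proof.
move=> h; have := @nth_find _ 0 (fun k => reach t k i j) (iota 0 n).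
by rewrite has_find size_iota => /(_ h); rewrite nth_iota // add0n.
Qed.

Lemma tdist_sym t i j : symmetric t -> tdist t i j = tdist t j i.
Proof. by move=> st; rewrite /tdist; apply: eq_find => k; exact: reach_sym. Qed.

Lemma tdist_n t i j : (tdist t i j <= n)%N.
Proof. by rewrite /tdist; have := find_size (fun k => reach t k i j) (iota 0 n); rewrite size_iota. Qed.

Lemma tdist_pos t i j : i != j -> (0 < tdist t i j)%N.
Proof.
move=> ij; rewrite lt0n; apply/negP => /eqP d0.
have : reach t (tdist t i j) i j.
  by apply: tdist_reach; rewrite d0 (leq_ltn_trans (leq0n _) (ltn_ord i)).
by rewrite d0 /= (negbTE ij).
Qed.

Lemma reach_connect t k i j : reach t k i j -> connect t i j.
Proof.
elim: k i => [|k IH] i /=; first by move/eqP ->.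
by case/existsP => v /andP[tiv r]; apply: connect_trans (connect1 tiv) (IH _ r).
Qed.

Lemma path_reach t i p : path t i p -> reach t (size p) i (last i p).
Proof.
elim: p i => [|v p IH] i /=; first by rewrite eqxx.
by case/andP => tiv pp; apply/existsP; exists v; rewrite tiv IH.
Qed.

Lemma connect_upath t i j : connect t i j ->
  exists p, [/\ path t i p, last i p = j, uniq (i :: p) & (size p < n)%N].
Proof.
move/connectP => [p pp ->]; case/shortenP: pp => p' pp' up' _.
exists p'; split => //.
have := max_card (mem (i :: p')); rewrite card_ord.
by move/card_uniqP: up' => ->.
Qed.

Lemma tdist_lt t i j : connect t i j -> (tdist t i j < n)%N.
Proof.
case/connect_upath => p [pp lp _ sp].
have r : reach t (size p) i j by rewrite -lp; apply: path_reach.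
exact: leq_ltn_trans (tdist_le r sp) sp.
Qed.

Lemma tdist_step t i j l : (forall a b, connect t a b) -> i != j ->
  (tdist t i j <= l)%N -> t i j \/ exists v, [/\ v != j, t i v & (tdist t v j <= l.-1)%N].
Proof.
move=> ct ij.
have dn := tdist_lt (ct i j).
move: dn (tdist_reach dn) (tdist_pos t ij); case: (tdist t i j) => // d dn.
move=> /existsP[v /andP[tiv rvj]] _ dl.
case: (eqVneq v j) => [<-|vj]; first by left.
right; exists v; split => //.
apply: leq_trans (tdist_le rvj (ltnW dn)) _.
by case: l dl.
Qed.

Lemma tdist_le1 t i j : (forall a b, connect t a b) -> i != j ->
  (tdist t i j <= 1)%N = t i j.
Proof.
move=> ct ij; apply/idP/idP => [h|tij].
  case: (tdist_step ct ij h) => // [[v [vj _ /= h0]]].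
  have : reach t (tdist t v j) v j by apply: tdist_reach; apply: tdist_lt.
  by move: h0; rewrite leqn0 => /eqP -> /=; rewrite (negbTE vj).
apply: tdist_le; first by apply/existsP; exists j; rewrite tij eqxx.
have := ltn_ord i; have := ltn_ord j; move: ij; rewrite -val_eqE /=. lia.
Qed.

Lemma interior_deg t i p : symmetric t -> path t i p -> uniq (i :: p) ->
  {subset [predD1 p & last i p] <= [pred v | (1 < tdeg t v)%N]}.
Proof.
move=> st pp up v /andP[vl vp].
case/splitPr: vp pp up vl => p1 p2.
case: p2 => [|w p2] pp up vl.
  by rewrite last_cat /= eqxx in vl.
rewrite cat_path /= in pp; case/and3P: pp => _ tpv /andP[tvw _].
have hne : last i p1 != w.
  move: up; rewrite -cat_cons cat_uniq => /and3P[_ /hasPn /(_ w) h _].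
  apply/eqP => hw; move: h; rewrite !inE eqxx orbT /= -hw => /(_ isT).
  by rewrite -[_ || _]/(last i p1 \in i :: p1) mem_last.
rewrite inE /tdeg; apply: leq_trans (subset_leq_card (_ : [set last i p1; w] \subset _)).
  by rewrite cards2 hne.
by apply/subsetP => u; rewrite !inE => /orP[]/eqP ->; rewrite ?tvw // st.
Qed.

Lemma tdist_diam t i j : symmetric t -> connect t i j ->
  (tdist t i j <= #|[set v | (1 < tdeg t v)%N]|.+1)%N.
Proof.
move=> st; case/connect_upath => p [pp lp up sp].
apply: leq_trans (tdist_le _ sp) _; first by rewrite -lp; apply: path_reach.
case: p pp lp up sp => [|a p] pp lp up sp //.
have hl : last i (a :: p) \in a :: p by rewrite /= mem_last.
have c1 : #|[predD1 (a :: p) & last i (a :: p)]| = size p.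
  have := cardD1 (last i (a :: p)) (mem (a :: p)).
  move: up; rewrite cons_uniq => /andP[_ /card_uniqP ->].
  rewrite hl /= add1n => -[] <-.
  done.
rewrite /= ltnS -c1; apply: subset_leq_card; apply/subsetP => v hv; rewrite inE.
exact: (interior_deg st pp up hv).
Qed.

End Graph.
Section Feas.
Variables (R : realFieldType) (n : nat).
Implicit Types (t : rel 'I_n) (i j : 'I_n).

Lemma x_edges_sym (e : rel 'I_n) (x : 'I_n -> 'I_n -> R) :
  symmetric e -> (forall i j, e i j -> x i j = x j i) -> symmetric (x_edges e x).
Proof.
move=> se xs i j; rewrite /x_edges se.
by case eji: (e j i) => //=; rewrite xs // se.
Qed.

Lemma feas_walk e delta L (x : 'I_n -> 'I_n -> R) w :
  symmetric e -> F2Q_feasible e delta L x w ->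
  forall l i j, (1 <= l <= L)%N -> i != j -> w l i j != 0 ->
  exists2 k, (k <= l)%N & reach (x_edges e x) k i j.
Proof.
move=> se [hx [hw [h1 [h1n [hle [hln [hL hdeg]]]]]]].
have sx : symmetric (x_edges e x) by apply: x_edges_sym => // i j /hx[].
have x01 i j : e i j -> x i j != 0 -> x_edges e x i j.
  move=> eij; rewrite /x_edges eij /=; case: (hx i j eij) => -[] -> _ //.
  by rewrite eqxx.
elim=> [|l IH] i j //.
wlog ij : i j / (i < j)%N => [hwl|].
  move=> hl nij nz; case: (ltngtP i j) => [lt|gt|eq].
  - exact: hwl.
  - have nji : j != i by rewrite eq_sym.
    have nz' : w l.+1 j i != 0 by case: (hw _ _ _ hl nij) => <-.
    have [k kl r] := hwl j i gt hl nji nz'.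
    by exists k => //; rewrite reach_sym.
  - by move: nij; rewrite -val_eqE /= eq eqxx.
move=> hl nij nz.
case: l IH hl nz => [|l] IH hl nz.
  case eij: (e i j).
    exists 1%N => //; apply/existsP; exists j; rewrite /= eqxx andbT.
    by apply: x01 => //; rewrite -h1.
  by move: nz; rewrite h1n ?eij ?eqxx.
case: (pickP (fun k => [&& e i k, k != j & x i k * w l.+1 k j != 0])) => [k /and3P[eik kj]|none].
  rewrite mulf_eq0 negb_or => /andP[xik wkj].
  have hl' : (1 <= l.+1 <= L)%N by move: hl; lia.
  have [k' kl r] := IH k j hl' kj wkj.
  exists k'.+1; first by []. 
  by apply/existsP; exists k; rewrite x01.
have s0 : \sum_(k : 'I_n | e i k && (k != j)) x i k * w l.+1 k j = 0.
  by apply: big1 => k /andP[eik kj]; have := none k; rewrite eik kj /= => /negbFE/eqP.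
have hl2 : (2 <= l.+2 <= L)%N by move: hl; lia.
have w0 : 0 <= w l.+2 i j by case: (hw _ _ _ hl nij) => _ /andP[].
case eij: (e i j).
  case: (eqVneq (x i j) 0) => [x0|xn0].
    have := hle _ _ _ hl2 eij ij; rewrite /= s0 x0 addr0 => wle.
    by move: nz; rewrite eq_le wle w0.
  by exists 1%N => //; apply/existsP; exists j; rewrite /= eqxx andbT x01.
have := hln _ _ _ hl2 (negbT eij) ij; rewrite /= s0 => wle.
by move: nz; rewrite eq_le wle w0.
Qed.

Lemma w_zero e delta L (x : 'I_n -> 'I_n -> R) w :
  symmetric e -> F2Q_feasible e delta L x w ->
  forall l i j, (1 <= l <= L)%N -> i != j -> (l < tdist (x_edges e x) i j)%N ->
  w l i j = 0.
Proof.
move=> se hf l i j hl ij ld; apply/eqP; apply/negP => /negP nz.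
have [k kl r] := feas_walk se hf hl ij nz.
have kn : (k < n)%N by apply: leq_ltn_trans kl (leq_trans ld (tdist_n _ _ _)).
by move: (tdist_le r kn); rewrite leqNgt (leq_ltn_trans kl ld).
Qed.

End Feas.
Section Aux.
Variables (R : realFieldType) (n : nat).
Implicit Types (t : rel 'I_n) (i j : 'I_n).

Lemma card_sum (T : finType) (P : pred T) : #|[set j | P j]| = (\sum_(j | P j) 1)%N.
Proof. by rewrite -sum1_card; apply: eq_bigl => j; rewrite inE. Qed.

Lemma card_pairs t : #|[set p : 'I_n * 'I_n | t p.1 p.2]| = (\sum_i tdeg t i)%N.
Proof.
rewrite (card_sum (fun p : 'I_n * 'I_n => t p.1 p.2)).
rewrite [RHS](eq_bigr (fun i => \sum_(j | t i j) 1)%N); last first.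
  by move=> i _; rewrite /tdeg (card_sum (t i)).
by rewrite pair_big_dep.
Qed.

Lemma deg_sum (e : rel 'I_n) (x : 'I_n -> 'I_n -> R) i :
  (forall j, e i j -> x i j = 0 \/ x i j = 1) ->
  \sum_(j | e i j) x i j = (#|[set j | e i j && (x i j == 1)]|)%:R.
Proof.
move=> hx; rewrite card_sum natr_sum (bigID (fun j => x i j == 1)) /=.
rewrite [X in _ + X]big1 ?addr0.
  by apply: eq_bigr => j /andP[_ /eqP].
by move=> j /andP[/hx[]// -> ]; rewrite eqxx.
Qed.

Lemma sum_split (L d : nat) (g : nat -> R) : (1 <= d <= L)%N ->
  (forall l, (1 <= l < d)%N -> g l = 0) ->
  \sum_(1 <= l < L) g l = \sum_(d <= l < L) g l.
Proof.
move=> /andP[d1 dL] h; rewrite (@big_cat_nat _ _ _ d 1 L) //= big_nat big1 ?add0r //.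

Qed.

Lemma min_exists (T : finType) (P : T -> Prop) (f : T -> R) :
  (exists x, P x) -> exists x, P x /\ forall y, P y -> f x <= f y.
Proof.
move=> [x0 px0].
suff : forall s : seq T, (exists2 x, x \in s & P x) ->
  exists x, P x /\ forall y, y \in s -> P y -> f x <= f y.
  move=> /(_ (enum T)) []; first by exists x0; rewrite ?mem_enum.
  by move=> x [px hx]; exists x; split => // y; apply: hx; rewrite mem_enum.
elim=> [|a s IH] /=; first by case.
move=> hex.
case: (classic (exists2 x, x \in s & P x)) => [hs|hs].
  have [x [px hx]] := IH hs.
  case: (classic (P a)) => pa.
    case: (leP (f a) (f x)) => fa.
      exists a; split => // y; rewrite inE => /orP[/eqP -> //|ys py].
      exact: le_trans fa (hx _ ys py).
    exists x; split => // y; rewrite inE => /orP[/eqP -> _|ys py]; last exact: hx.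
    exact: ltW.
  exists x; split => // y; rewrite inE => /orP[/eqP -> //|ys py]; exact: hx.
have pa : P a.
  apply: NNPP => npa; apply: hs.
  case: hex => y; rewrite inE => /orP[/eqP -> //|ys py]; by exists y.
exists a; split => // y; rewrite inE => /orP[/eqP -> //|ys py].
by case: hs; exists y.
Qed.
End Aux.
Section Feas2.
Variables (R : realFieldType) (n : nat).
Implicit Types (t : rel 'I_n) (i j : 'I_n).

Lemma wL1 (e : rel 'I_n) delta L (x : 'I_n -> 'I_n -> R) w :
  (0 < L)%N -> F2Q_feasible e delta L x w -> forall i j, i != j -> w L i j = 1.
Proof.
move=> L0 [hx [hw [h1 [h1n [hle [hln [hL hdeg]]]]]]] i j ij.
case: (ltngtP i j) => [lt|gt|eq]; first exact: hL.
  have hl : (1 <= L <= L)%N by rewrite L0 leqnn.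
  by case: (hw L i j hl ij) => -> _; exact: hL.
by move: ij; rewrite -val_eqE /= eq eqxx.
Qed.

Lemma obj_ge e delta L (x : 'I_n -> 'I_n -> R) w mu :
  (0 < L)%N -> symmetric e -> F2Q_feasible e delta L x w ->
  (forall i j, i != j -> 0 <= mu i j) ->
  CA mu (x_edges e x) <= F2Q_obj mu L w.
Proof.
move=> L0 se hf mupos; rewrite /CA /F2Q_obj.
apply: ler_sum => i _; apply: ler_sum => j ij; apply: ler_wpM2l; first exact: mupos.
have hw := hf.2.1.
set d := tdist (x_edges e x) i j.
have d1 : (1 <= d)%N by apply: tdist_pos.
have dL : (d <= L)%N.
  rewrite leqNgt; apply/negP => Ld.
  have hl : (1 <= L <= L)%N by rewrite L0 leqnn.
  have := w_zero se hf hl ij Ld; rewrite (wL1 L0 hf ij) => h.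
  by move: (@oner_neq0 R); rewrite h eqxx.
rewrite (@sum_split _ L d); last first.
- move=> l /andP[l1 ld]; apply: (w_zero se hf) => //.
  by rewrite l1 (leq_trans (ltnW ld) dL).
- by rewrite d1 dL.
have : \sum_(d <= l < L) w l i j <= \sum_(d <= l < L) (1 : R).
  apply: ler_sum_nat => l /andP[dl lL].
  have hl : (1 <= l <= L)%N by rewrite (leq_trans d1 dl) ltnW.
  by case: (hw l i j hl ij) => _ /andP[].
rewrite sumr_const_nat natrB // => h.
lra.
Qed.

Lemma feas_adm e delta L (x : 'I_n -> 'I_n -> R) w :
  (0 < L)%N -> symmetric e -> F2Q_feasible e delta L x w ->
  (\sum_(i : 'I_n) delta i)%N = (2 * (n - 1))%N ->
  admissible e delta (x_edges e x).
Proof.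
move=> L0 se hf dsum.
have hx := hf.1; have hdeg := hf.2.2.2.2.2.2.2.
have hdg : forall i, tdeg (x_edges e x) i = delta i.
  move=> i; apply/eqP; rewrite -(eqr_nat R) /tdeg /x_edges -deg_sum ?hdeg //.
  by move=> j /hx[].
split => //; split.
- by move=> i j /andP[].
- by apply: x_edges_sym => // i j /hx[].
- move=> i j; case: (eqVneq i j) => [->|ij]; first exact: connect0.
  have nz : w L i j != 0 by rewrite (wL1 L0 hf ij) oner_neq0.
  have hl : (1 <= L <= L)%N by rewrite L0 leqnn.
  have [k _ r] := feas_walk se hf hl ij nz.
  exact: reach_connect r.
- by rewrite card_pairs -dsum; apply: eq_bigr => i _; rewrite hdg.
Qed.
End Feas2.
Unset Implicit Arguments.

Theorem proposition2 (R : realFieldType) (n : nat) (e : rel 'I_n)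
    (mu : 'I_n -> 'I_n -> R) (delta : 'I_n -> nat) :
  symmetric e -> irreflexive e ->
  (forall i j, i != j -> mu i j = mu j i) ->
  (forall i j, i != j -> 0 <= mu i j) ->
  (forall i, (0 < delta i)%N) ->
  (\sum_(i : 'I_n) delta i)%N = (2 * (n - 1))%N ->
  (exists t : rel 'I_n, admissible e delta t) ->
  let L := (#|[set i : 'I_n | (1 < delta i)%N]| + 2)%N in
  exists (x : 'I_n -> 'I_n -> R) (w : nat -> 'I_n -> 'I_n -> R),
    [/\ F2Q_feasible e delta L x w,
        (forall x' w', F2Q_feasible e delta L x' w' ->
           F2Q_obj mu L w <= F2Q_obj mu L w'),
        optimal_tree e delta mu (x_edges e x)
      & F2Q_obj mu L w = CA mu (x_edges e x)].
Proof.
move=> se ie musym mupos dpos dsum [t0 adm0] L.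
have L0 : (0 < L)%N by rewrite /L addn2.
pose relS (S : {set 'I_n * 'I_n}) : rel 'I_n := fun i j => (i, j) \in S.
have relSK (t : rel 'I_n) : relS [set p | t p.1 p.2] = t.
  by apply: functional_extensionality => i; apply: functional_extensionality => j;
    rewrite /relS inE.
have hex : exists S, admissible e delta (relS S).
  by exists [set p | t0 p.1 p.2]; rewrite relSK.
have [S [admS minS]] := min_exists (fun S => CA mu (relS S)) hex.
pose t := relS S.
have admT : admissible e delta t := admS.
have opt : optimal_tree e delta mu t.
  split => // t' adm'; have := minS [set p | t' p.1 p.2]; rewrite relSK; exact.
clearbody t; clear minS admS.
case: (admT) => [[te st ct ccard] tdeg_t].
pose x i j : R := if t i j then 1 else 0.
pose w l i j : R := if (tdist t i j <= l)%N then 1 else 0.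
have xe : x_edges e x = t.
  apply: functional_extensionality => i; apply: functional_extensionality => j.
  rewrite /x_edges /x; case tij: (t i j).
    by apply/andP; split; [exact: (te i j tij) | exact: eqxx].
  by rewrite /= (eq_sym 0) oner_eq0 andbF.
exists x, w; rewrite xe.
have hdiam i j : (tdist t i j <= L.-1)%N.
  apply: leq_trans (tdist_diam st (ct i j)) _.
  rewrite /L addn2 /= ltnS; apply: subset_leq_card; apply/subsetP => v.
  by rewrite !inE tdeg_t.
have hne i j : e i j -> i != j by move=> eij; apply/eqP => h; move: eij; rewrite h ie.
have xge i j : 0 <= x i j by rewrite /x; case: (t i j); rewrite ?ler01 ?lexx.
have wge l i j : 0 <= w l i j by rewrite /w; case: ifP; rewrite ?ler01 ?lexx.
have feas : F2Q_feasible e delta L x w.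
  split; [|split;[|split;[|split;[|split;[|split;[|split]]]]]].
  - move=> i j eij; rewrite /x st; split => //; by case: (t j i); [right|left].
  - move=> l i j _ ij; rewrite /w tdist_sym //; split => //.
    by case: ifP => _; rewrite ?ler01 ?lexx.
  - by move=> i j eij; rewrite /w /x tdist_le1 // hne.
  - move=> i j ij neij; rewrite /w tdist_le1 //; last by rewrite -val_eqE /= ltn_eqF.
    have : ~~ t i j by apply/negP => /te; rewrite (negbTE neij).
    by move/negbTE ->.
  - move=> l i j hl eij ij; rewrite {1}/w; case: ifP => hd; last first.
      by apply: addr_ge0; [exact: xge|]; apply: sumr_ge0 => k _; exact: mulr_ge0 (xge _ _) (wge _ _ _).
    case: (tdist_step ct (hne _ _ eij) hd) => [tij | [v [vj tiv hv]]].
      by rewrite {1}/x tij lerDl; apply: sumr_ge0 => k _; exact: mulr_ge0 (xge _ _) (wge _ _ _).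
    rewrite (bigD1 v) /=; last by rewrite te.
    have hxv : x i v = 1 by rewrite /x tiv.
    have hwv : w l.-1 v j = 1 by rewrite /w hv.
    rewrite hxv hwv mul1r.
    have : 0 <= \sum_(i0 | (e i i0 && (i0 != j)) && (i0 != v)) x i i0 * w l.-1 i0 j.
      by apply: sumr_ge0 => k _; exact: mulr_ge0 (xge _ _) (wge _ _ _).
    have := xge i j; lra.
  - move=> l i j hl neij ij; rewrite {1}/w; case: ifP => hd; last first.
      by apply: sumr_ge0 => k _; exact: mulr_ge0 (xge _ _) (wge _ _ _).
    have nij : i != j by rewrite -val_eqE /= ltn_eqF.
    case: (tdist_step ct nij hd) => [tij | [v [vj tiv hv]]].
      by move: neij; rewrite te.
    rewrite (bigD1 v) /=; last by rewrite te.
    have hxv : x i v = 1 by rewrite /x tiv.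
    have hwv : w l.-1 v j = 1 by rewrite /w hv.
    rewrite hxv hwv mul1r.
    have : 0 <= \sum_(i0 | (e i i0 && (i0 != j)) && (i0 != v)) x i i0 * w l.-1 i0 j.
      by apply: sumr_ge0 => k _; exact: mulr_ge0 (xge _ _) (wge _ _ _).
    lra.
  - move=> i j ij; rewrite /w (leq_trans (hdiam i j)) //; exact: leq_pred.
  - move=> i; rewrite /x -big_mkcondr /=.
    rewrite (eq_bigl (t i)); last by move=> j /=; case tij: (t i j); rewrite ?andbF // te.
    rewrite -tdeg_t /tdeg (card_sum (t i)) natr_sum.
    by apply: eq_bigr.
have objw : F2Q_obj mu L w = CA mu t.
  rewrite /F2Q_obj /CA; apply: eq_bigr => i _; apply: eq_bigr => j ij; congr (_ * _).
  set d := tdist t i j.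
  have d1 : (1 <= d)%N by apply: tdist_pos.
  have dL : (d <= L.-1)%N by apply: hdiam.
  rewrite (@sum_split _ L d); last first.
  - by move=> l /andP[_ ld]; rewrite /w leqNgt ld.
  - by rewrite d1 (leq_trans dL) // leq_pred.
  rewrite (eq_big_nat _ _ (F2 := fun _ => 1)); last first.
    by move=> l /andP[dl _]; rewrite /w -/d dl.
  rewrite sumr_const_nat natrB; last by rewrite (leq_trans dL) // leq_pred.
  lra.
split => //.
move=> x' w' hf; rewrite objw.
apply: le_trans (opt.2 _ (feas_adm L0 se hf dsum)) _.
exact: (obj_ge L0 se hf mupos).
Qed.
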